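(* Every unicellular fatgraph $\mathbb{G}$ of (Euler) genus $g$ satisfies $d(\mathbb{G})\ge g$.
   Context: A (rooted) fatgraph with $n$ ribbons is $\mathbb{G}=([2n+1],\sigma,\gamma,\omega)$: sectors $[2n+1]$; permutations $\sigma,\gamma$ whose cycles are vertices and boundary components, $\sigma(2n+1)=\gamma(2n+1)=1$; orientations $\omega:[2n+1]\to\{\pm1\}$ with $\omega(1)=\omega(2n+1)$; the pairs $(x,\sigma(x))$, $x\ne2n+1$, are matched into ribbons $((x,\sigma(x)),(y,\sigma(y)))$, untwisted ($x,\sigma(y)$ and $\sigma(x),y$ $\gamma$-consecutive, $\omega(x)=\omega(\sigma(y))$, $\omega(\sigma(x))=\omega(y)$) or twisted ($x,y$ and $\sigma(x),\sigma(y)$ $\gamma$-consecutive, $\omega(x)=-\omega(y)$, $\omega(\sigma(x))=-\omega(\sigma(y))$). Flipping a vertex reverses its cyclic order and negates its sectors' orientations. Euler genus: $2-g=v-e+b$ ($v$ vertices, $e$ ribbons, $b$ boundary components). Unicellular: $\gamma=(1,\dots,2n+1)$ with order $<_\gamma$. Reversals for sectors $i<_\gamma j$: gluing (distinct vertices $(i,i_1,\dots,i_p),(j,j_1,\dots,j_q)$, after flipping $\omega(i)=-\omega(j)$, become $(i,j_1,\dots,j_q,j,i_1,\dots,i_p)$); slicing (vertex $(i,j_1,\dots,j_q,j,i_1,\dots,i_p)$ with $\omega(i)=-\omega(j)$ becomes $(i,i_1,\dots,i_p)$, $(j,j_1,\dots,j_q)$); half-flipping (same vertex with $\omega(i)=\omega(j)$: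 split, flip $(j,j_1,\dots,j_q)$, glue back along $i,j$, giving $(i,j_q,\dots,j_1,j,i_1,\dots,i_p)$). The r-distance $d(\mathbb{G})$ is the minimum number of reversals transforming $\mathbb{G}$ into a unicellular fatgraph of genus $0$ (a plane tree). *)

(* Defs.v *)
From HB Require Import structures.
From mathcomp Require Import all_boot all_order all_algebra all_fingroup.

Set Implicit Arguments.
Unset Strict Implicit.
Unset Printing Implicit Defensive.

(* Sectors [2n+1] = {1,...,2n+1}, encoded 0-based: sector k is the ordinal k-1.
   Sector 1 is ord0, sector 2n+1 is ord_max. *)
Notation sector n := 'I_(n.*2).+1.

(* Raw data of a rooted fatgraph with n ribbons: (sigma, gamma, omega);
   omega x = true encodes orientation +1, false encodes -1. *)
Record fatgraph (n : nat) := Fatgraph {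
  sg : {perm sector n};
  gm : {perm sector n};
  om : {ffun sector n -> bool}
}.

Section Fatgraphs.
Variable n : nat.
Implicit Types (G : fatgraph n) (x y i j : sector n).

Definition gcons G (a b : sector n) : Prop := gm G a = b \/ gm G b = a.

Definition untwisted_ribbon G x y : Prop :=
  [/\ gcons G x (sg G y), gcons G (sg G x) y,
      om G x = om G (sg G y) & om G (sg G x) = om G y].

Definition twisted_ribbon G x y : Prop :=
  [/\ gcons G x y, gcons G (sg G x) (sg G y),
      om G x = ~~ om G y & om G (sg G x) = ~~ om G (sg G y)].

(* The pairs (x, sigma x), x <> 2n+1, are identified with x; a matching into
   ribbons is a fixed-point-free involution m on the sectors other than 2n+1. *)
Definition is_fatgraph G : Prop :=
  [/\ sg G ord_max = ord0, gm G ord_max = ord0, om G ord0 = om G ord_max &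
   exists m : sector n -> sector n,
     forall x, x != ord_max ->
       [/\ m x != ord_max, m x != x, m (m x) = x &
           untwisted_ribbon G x (m x) \/ twisted_ribbon G x (m x)]].

(* vertices = cycles of sigma, boundary components = cycles of gamma *)
Definition nverts G : nat := #|porbits (sg G)|.
Definition nbound G : nat := #|porbits (gm G)|.

(* Euler genus: 2 - g = v - e + b, with e = n ribbons. *)
Definition genus G : int := ((2 + n)%:Z - (nverts G)%:Z - (nbound G)%:Z)%R.

Definition unicellular G : Prop := forall x, gm G x = ordS x.

Definition flipped G x G1 : Prop :=
  [/\ gm G1 = gm G,
      forall y, sg G1 y = if y \in porbit (sg G) x then ((sg G)^-1)%g y else sg G y
    & forall y, om G1 y = if y \in porbit (sg G) x then ~~ om G y else om G y].

Definition transposed G i j G' : Prop :=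
  [/\ gm G' = gm G, om G' = om G & forall y, sg G' y = sg G (tperm i j y)].

(* Reversals for sectors i <_gamma j.  Since reversals keep gamma and we only
   use them starting from unicellular fatgraphs, <_gamma is the natural order. *)
Definition gluing G i j G' : Prop :=
  [/\ (i < j)%N, j \notin porbit (sg G) i &
      (om G i != om G j /\ transposed G i j G') \/
      (om G i = om G j /\
        exists G1, (flipped G i G1 \/ flipped G j G1) /\ transposed G1 i j G')].

Definition slicing G i j G' : Prop :=
  [/\ (i < j)%N, j \in porbit (sg G) i, om G i != om G j & transposed G i j G'].

(* split along i, j; flip the vertex (j, j1, ..., jq); glue back along i, j *)
Definition half_flipping G i j G' : Prop :=
  [/\ (i < j)%N, j \in porbit (sg G) i, om G i = om G j &
      exists G1 G2, [/\ transposed G i j G1, flipped G1 j G2 & transposed G2 i j G']].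

Definition reversal G G' : Prop :=
  is_fatgraph G' /\
  exists i j, [\/ gluing G i j G', slicing G i j G' | half_flipping G i j G'].

Fixpoint reversal_chain (k : nat) G H : Prop :=
  match k with
  | 0 => G = H
  | k'.+1 => exists G', reversal G G' /\ reversal_chain k' G' H
  end.

Definition plane_tree G : Prop := is_fatgraph G /\ unicellular G /\ genus G = 0%R.

End Fatgraphs.

(* Main.v *)
Require Import Defs.
From mathcomp Require Import all_boot all_order all_algebra all_fingroup.
From mathcomp Require Import zify.
Import Order.TTheory GRing.Theory Num.Theory.

Section Aux.
Variable T : finType.
Implicit Types p q : {perm T}.
Local Open Scope group_scope.

Lemma sub_porbit p q : (forall z, q z \in porbit p z) ->
  forall y, porbit q y \subset porbit p y.
Proof.
move=> Hq y; apply/subsetP => u /porbitP [i ->].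
elim: i => [|i IH]; first by rewrite expg0 perm1 porbit_id.
rewrite expgSr permM.
move: (Hq ((q ^+ i) y)).
by rewrite (eqP (_ : porbit p ((q ^+ i) y) == porbit p y)) // eq_porbit_mem.
Qed.

Lemma flip_porbit p q x :
  (forall z, q z = if z \in porbit p x then p^-1 z else p z) ->
  forall y, porbit q y = porbit p y.
Proof.
move=> Hq y; apply/eqP; rewrite eqEsubset; apply/andP; split.
  apply: sub_porbit => z; rewrite Hq; case: ifP => _.
    by rewrite -porbitV; have := mem_porbit p^-1 1 z; rewrite expg1.
  by have := mem_porbit p 1 z; rewrite expg1.
apply: sub_porbit => z.
case Hz: (z \in porbit p x).
  have Hpz : p z \in porbit p x.
    rewrite -eq_porbit_mem.
    have := porbit_perm p 1 z; rewrite expg1 => ->.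
    by rewrite eq_porbit_mem.
  rewrite porbit_sym.
  have := mem_porbit q 1 (p z); rewrite expg1 Hq Hpz permK; done.
by have := mem_porbit q 1 z; rewrite expg1 Hq Hz.
Qed.

Lemma flip_porbits p q x :
  (forall z, q z = if z \in porbit p x then p^-1 z else p z) ->
  porbits q = porbits p.
Proof.
move=> Hq; rewrite /porbits; apply: eq_imset => y; exact: flip_porbit Hq y.
Qed.

Lemma tperm_le p i j : #|porbits (tperm i j * p)| <= #|porbits p| + 1.
Proof.
have := porbits_mul_tperm p i j; case: (i != j); case: (i \notin _) => /=; lia.
Qed.

End Aux.

Section Main.
Variable n : nat.

Lemma transposed_sg {G G' : fatgraph n} {i j} :
  transposed G i j G' -> sg G' = (tperm i j * sg G)%g.
Proof. by case=> _ _ H; apply/permP => y; rewrite H permM. Qed.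

Lemma flipped_nv {G G1 : fatgraph n} {x} :
  flipped G x G1 -> porbits (sg G1) = porbits (sg G).
Proof. by case=> _ H _; apply: flip_porbits H. Qed.

Lemma step {G G' : fatgraph n} : reversal G G' ->
  gm G' = gm G /\ nverts G' <= nverts G + 1.
Proof.
case=> _ [i [j [[lt _ [[_ Ht]|[_ [G1 [Hf Ht]]]]]|[lt _ _ Ht]|[lt jin _ [G1 [G2 [Ht1 Hf Ht2]]]]]]].
- split; first by case: Ht.
  by rewrite /nverts (transposed_sg Ht) tperm_le.
- have [gG1 sG1] : gm G1 = gm G /\ porbits (sg G1) = porbits (sg G).
    by case: Hf => Hf; split; [case: Hf| exact: flipped_nv Hf| case: Hf | exact: flipped_nv Hf].
  split; first by case: Ht => ->.
  by rewrite /nverts (transposed_sg Ht) -sG1 tperm_le.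
- split; first by case: Ht.
  by rewrite /nverts (transposed_sg Ht) tperm_le.
- split; first by case: Ht2 => -> _ _; case: Hf => -> _ _; case: Ht1.
  rewrite /nverts (transposed_sg Ht2).
  have e1 := transposed_sg Ht1.
  have e2 := flipped_nv Hf.
  have h1 := porbits_mul_tperm (sg G) i j.
  have h2 := porbits_mul_tperm (sg G1) i j.
  have h3 := porbits_mul_tperm (sg G2) i j.
  have ij : i != j by rewrite neq_ltn lt.
  rewrite ij porbit_sym jin /= in h1.
  have h2' : (tperm i j * sg G1)%g = sg G by rewrite e1 mulgA tperm2 mul1g.
  rewrite /= h2' ij in h2.
  have Hporb : porbit (sg G2) j = porbit (sg G1) j.
    by case: Hf => _ H _; apply: (@flip_porbit _ _ _ _ H).
  rewrite ij Hporb e2 in h3.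
  rewrite -e1 in h1.
  move: h1 h2 h3; case: (i \notin _) => /=; rewrite ?doubleS ?double0 => a b c.
all: set u := #|porbits (sg G)| in a b c *; set w := #|porbits (sg G1)| in a b c *.
all: clearbody u w; move: a b c; set x := #|porbits _|; clearbody x => a b c.
all: lia.
Qed.

Lemma chain {k} {G H : fatgraph n} : reversal_chain k G H ->
  gm H = gm G /\ nverts H <= nverts G + k.
Proof.
elim: k G => [|k IH] G /=; first by move=> ->; rewrite addn0.
case=> G' [/step [g1 v1] /IH [g2 v2]]; split; first by rewrite g2.
lia.
Qed.

End Main.

(* d(G) >= g, with d(G) the minimum length of a reversal sequence from G to a
   plane tree (infinite if none exists): every such sequence has length >= g. *)
Theorem corollary1 (n : nat) (G : fatgraph n) :
  is_fatgraph G -> unicellular G ->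
  forall (k : nat) (H : fatgraph n), reversal_chain k G H -> plane_tree H ->
  (genus G <= Posz k)%R.
Proof.
move=> _ _ k H /chain [g v] [_ [_ gH]].
move: gH; rewrite /genus /nbound g => gH.
lia.
Qed.
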